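(* Let $k$ be a field of characteristic zero. The variety $S_I\subset\mathrm{SL}(2)\times_k\mathrm{SL}(2)$ of commuting pairs, defined by $XYX^{-1}Y^{-1}=I$, is $k$-rational of dimension $4$. *)

(* Defs.v *)
From HB Require Import structures.
From mathcomp Require Import all_boot all_order all_algebra.
From mathcomp Require Import fraction.
From mathcomp Require Import mpoly.

Set Implicit Arguments.
Unset Strict Implicit.
Unset Printing Implicit Defensive.

Import GRing.Theory.
Local Open Scope ring_scope.

Definition in_ideal (R : comNzRingType) (n m : nat)
  (gens : 'I_m -> {mpoly R[n]}) (p : {mpoly R[n]}) : Prop :=
  exists cs : 'I_m -> {mpoly R[n]}, p = \sum_(i < m) cs i * gens i.

Definition in_radical (R : comNzRingType) (n m : nat)
  (gens : 'I_m -> {mpoly R[n]}) (p : {mpoly R[n]}) : Prop :=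
  exists e : nat, in_ideal gens (p ^+ e).

Definition ratfun (k : fieldType) (d : nat) := {fraction {mpoly k[d]}}.

Definition ev_ratfun (k : fieldType) (n d : nat) (h : 'I_n -> ratfun k d)
  (p : {mpoly k[n]}) : ratfun k d :=
  mmap (fun c : k => FracField.tofrac (c%:MP : {mpoly k[d]})) h p.

(* The affine variety V = V(gens) in A^n_k (with its reduced structure, i.e.
   coordinate ring k[x]/rad(gens)) is k-rational of dimension d: it is
   integral and its function field Frac(k[x]/rad(gens)) is k-isomorphic to the
   purely transcendental field k(t_0,...,t_{d-1}).
   Concretely: there is a k-algebra map k[x] -> k(t) (x_i |-> h i) whose
   kernel is exactly rad(gens) (so k[x]/rad(gens) is a domain embedding into
   k(t)), and whose induced field map Frac(k[x]/rad(gens)) -> k(t) is onto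
   (every generator t_j is a quotient of images). *)
Definition k_rational_of_dim (k : fieldType) (n m : nat)
  (gens : 'I_m -> {mpoly k[n]}) (d : nat) : Prop :=
  exists h : 'I_n -> ratfun k d,
    (forall p : {mpoly k[n]}, ev_ratfun h p = 0 <-> in_radical gens p) /\
    (forall j : 'I_d, exists a b : {mpoly k[n]},
        ev_ratfun h b != 0 /\
        FracField.tofrac ('X_j : {mpoly k[d]}) = ev_ratfun h a / ev_ratfun h b).

(* Coordinates on A^8 = M_2 x M_2:
   X = [[x0, x1], [x2, x3]],  Y = [[x4, x5], [x6, x7]]. *)
Definition matX (k : fieldType) : 'M[{mpoly k[8]}]_2 :=
  \matrix_(i < 2, j < 2) 'X_(inord (2 * i + j)).
Definition matY (k : fieldType) : 'M[{mpoly k[8]}]_2 :=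
  \matrix_(i < 2, j < 2) 'X_(inord (4 + 2 * i + j)).

(* Defining equations of S_I inside SL(2) x SL(2):
   det X = 1, det Y = 1, and X Y X^{-1} Y^{-1} = I, where on SL(2) the
   inverse of a matrix is its adjugate. *)
Definition SI_eqs (k : fieldType) : 'I_6 -> {mpoly k[8]} :=
  fun i =>
    match val i with
    | 0 => \det (matX k) - 1
    | 1 => \det (matY k) - 1
    | 2 => (matX k *m matY k *m \adj (matX k) *m \adj (matY k) - 1%:M) 0 0
    | 3 => (matX k *m matY k *m \adj (matX k) *m \adj (matY k) - 1%:M) 0 1
    | 4 => (matX k *m matY k *m \adj (matX k) *m \adj (matY k) - 1%:M) 1 0
    | _ => (matX k *m matY k *m \adj (matX k) *m \adj (matY k) - 1%:M) 1 1
    end.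

(* Main.v *)
Require Import Defs.
From HB Require Import structures.
From mathcomp Require Import all_boot all_order all_algebra.
From mathcomp Require Import fraction.
From mathcomp Require Import mpoly.
From mathcomp Require Import ring.
Set Implicit Arguments. Unset Strict Implicit. Unset Printing Implicit Defensive.
Import GRing.Theory.
Local Open Scope ring_scope.

Lemma lift2 (i : 'I_2) (j : 'I_1) : lift i j = if val i == 0%N then 1 else 0.
Proof. by apply/val_inj; case: i => [[|[|i]] Hi]; case: j => [[|j] Hj]. Qed.
Lemma ord02 : (ord0 : 'I_2) = 0. Proof. by apply/val_inj. Qed.
Lemma det2 (R : comNzRingType) (A : 'M[R]_2) : \det A = A 0 0 * A 1 1 - A 0 1 * A 1 0.
Proof.
rewrite (expand_det_row _ 0) !big_ord_recl big_ord0 /cofactor !det_mx11 !mxE !lift2 /= ?ord02 expr0 expr1. 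
ring.
Qed.
Lemma adj2 (R : comNzRingType) (A : 'M[R]_2) : \adj A = \matrix_(i < 2, j < 2)
   (if (val i == 0%N) && (val j == 0%N) then A 1 1 else if (val i == 0%N) then - A 0 1 else if val j == 0%N then - A 1 0 else A 0 0).
Proof.
apply/matrixP => i j; rewrite !mxE /cofactor det_mx11 !mxE !lift2.
case: i => [[|[|i]] Hi] //; case: j => [[|[|j]] Hj] //=; rewrite ?expr0 ?expr1 ?mul1r ?mulN1r.
- by [].
- by [].
- by [].
- by rewrite -signr_odd /= expr0 mul1r.
Qed.

Section Exprs.
Variable R : comNzRingType.
Definition CM00e (x0 x1 x2 x3 y0 y1 y2 y3 : R) : R := ((((((x0) * (y0) + (x1) * (y2))) * (x3) + (((x0) * (y1) + (x1) * (y3))) * (- x2))) * (y3) + (((((x0) * (y0) + (x1) * (y2))) * (- x1) + (((x0) * (y1) + (x1) * (y3))) * (x0))) * (- y2)) - 1.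
Definition CM01e (x0 x1 x2 x3 y0 y1 y2 y3 : R) : R := ((((((x0) * (y0) + (x1) * (y2))) * (x3) + (((x0) * (y1) + (x1) * (y3))) * (- x2))) * (- y1) + (((((x0) * (y0) + (x1) * (y2))) * (- x1) + (((x0) * (y1) + (x1) * (y3))) * (x0))) * (y0)).
Definition CM10e (x0 x1 x2 x3 y0 y1 y2 y3 : R) : R := ((((((x2) * (y0) + (x3) * (y2))) * (x3) + (((x2) * (y1) + (x3) * (y3))) * (- x2))) * (y3) + (((((x2) * (y0) + (x3) * (y2))) * (- x1) + (((x2) * (y1) + (x3) * (y3))) * (x0))) * (- y2)).
Definition CM11e (x0 x1 x2 x3 y0 y1 y2 y3 : R) : R := ((((((x2) * (y0) + (x3) * (y2))) * (x3) + (((x2) * (y1) + (x3) * (y3))) * (- x2))) * (- y1) + (((((x2) * (y0) + (x3) * (y2))) * (- x1) + (((x2) * (y1) + (x3) * (y3))) * (x0))) * (y0)) - 1.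
End Exprs.

Section Gen22.
Variables (R : comNzRingType) (b c : nat -> nat -> R).
Definition MB := \matrix_(i < 2, j < 2) b i j.
Definition MC := \matrix_(i < 2, j < 2) c i j.
Definition CM := MB *m MC *m \adj MB *m \adj MC - 1%:M.
Lemma detMB : \det MB = b 0 0 * b 1 1 - b 0 1 * b 1 0.
Proof. by rewrite det2 !mxE. Qed.
Lemma detMC : \det MC = c 0 0 * c 1 1 - c 0 1 * c 1 0.
Proof. by rewrite det2 !mxE. Qed.
Lemma m12 : (1 %% 2)%N = 1%N. Proof. by []. Qed.
Ltac unf := rewrite /CM /MB /MC !adj2; do 4 (rewrite ?mxE ?big_ord_recl ?big_ord0 ?lift2 /=); rewrite ?m12 ?ord02.




Lemma CM00 : CM 0 0 = CM00e (b 0 0) (b 0 1) (b 1 0) (b 1 1) (c 0 0) (c 0 1) (c 1 0) (c 1 1).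
Proof. unf. rewrite /CM00e. ring. Qed.
Lemma CM01 : CM 0 1 = CM01e (b 0 0) (b 0 1) (b 1 0) (b 1 1) (c 0 0) (c 0 1) (c 1 0) (c 1 1).
Proof. unf. rewrite /CM01e. ring. Qed.
Lemma CM10 : CM 1 0 = CM10e (b 0 0) (b 0 1) (b 1 0) (b 1 1) (c 0 0) (c 0 1) (c 1 0) (c 1 1).
Proof. unf. rewrite /CM10e. ring. Qed.
Lemma CM11 : CM 1 1 = CM11e (b 0 0) (b 0 1) (b 1 0) (b 1 1) (c 0 0) (c 0 1) (c 1 0) (c 1 1).
Proof. unf. rewrite /CM11e. ring. Qed.
End Gen22.

Section Ideal.
Variables (R : comNzRingType) (n m : nat) (gens : 'I_m -> {mpoly R[n]}).
Lemma in_ideal0 : in_ideal gens 0.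
Proof. by exists (fun=> 0); rewrite big1 // => i _; rewrite mul0r. Qed.
Lemma in_idealD p q : in_ideal gens p -> in_ideal gens q -> in_ideal gens (p + q).
Proof.
move=> [c1 ->] [c2 ->]; exists (fun i => c1 i + c2 i).
by rewrite -big_split /=; apply: eq_bigr => i _; rewrite mulrDl.
Qed.
Lemma in_idealMl c p : in_ideal gens p -> in_ideal gens (c * p).
Proof.
move=> [c1 ->]; exists (fun i => c * c1 i).
by rewrite mulr_sumr; apply: eq_bigr => i _; rewrite mulrA.
Qed.
Lemma in_idealN p : in_ideal gens p -> in_ideal gens (- p).
Proof. by move=> h; rewrite -mulN1r; apply: in_idealMl. Qed.
Lemma in_idealB p q : in_ideal gens p -> in_ideal gens q -> in_ideal gens (p - q).
Proof. by move=> hp hq; apply: in_idealD => //; apply: in_idealN. Qed.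
Lemma in_ideal_gen i : in_ideal gens (gens i).
Proof.
exists (fun j => (j == i)%:R); rewrite (bigD1 i) //= eqxx mul1r big1 ?addr0 //.
by move=> j /negbTE ->; rewrite mul0r.
Qed.
Lemma in_ideal_gen_mul c i : in_ideal gens (c * gens i).
Proof. exact/in_idealMl/in_ideal_gen. Qed.
End Ideal.

Lemma in_ideal_trans (R : comNzRingType) (n m1 m2 : nat)
  (g1 : 'I_m1 -> {mpoly R[n]}) (g2 : 'I_m2 -> {mpoly R[n]}) p :
  (forall i, in_ideal g2 (g1 i)) -> in_ideal g1 p -> in_ideal g2 p.
Proof.
move=> h [c ->]; apply: (big_ind (in_ideal g2)).
- exact: in_ideal0.
- exact: in_idealD.
- by move=> i _; apply: in_idealMl.
Qed.

Lemma in_ideal_mor (R : comNzRingType) (n n' m : nat)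
  (f : {rmorphism {mpoly R[n]} -> {mpoly R[n']}}) (g : 'I_m -> {mpoly R[n]}) p :
  in_ideal g p -> in_ideal (fun i => f (g i)) (f p).
Proof.
move=> [c ->]; exists (fun i => f (c i)).
by rewrite rmorph_sum; apply: eq_bigr => i _; rewrite rmorphM.
Qed.

Lemma mpoly_ind_ring (R : comNzRingType) (n : nat) (P : {mpoly R[n]} -> Prop) :
  (forall c, P c%:MP) -> (forall i, P 'X_i) ->
  (forall p q, P p -> P q -> P (p + q)) -> (forall p q, P p -> P q -> P (p * q)) ->
  forall p, P p.
Proof.
move=> hC hX hD hM p; elim/mpolyind: p => [|c m p _ _ hp].
  by rewrite -mpolyC0; apply: (hC).
apply: (hD) => //; rewrite -mul_mpolyC; apply: (hM) => //.
rewrite mpolyXE_id; apply: (big_ind P) => [|x y|i _].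
- by rewrite -mpolyC1; apply: (hC).
- exact: (hM).
- elim: (m i) => [|e IH]; first by rewrite expr0 -mpolyC1; apply: (hC).
  by rewrite exprS; apply: (hM).
Qed.

Lemma xsub (R : comNzRingType) (n n' : nat) (lq : n.+1.-tuple {mpoly R[n']}) j :
  (j <= n)%N -> 'X_(inord j) \mPo lq = lq`_j.
Proof. by move=> hj; rewrite comp_mpolyXU inordK. Qed.

Lemma nz_meval (R : comNzRingType) (n : nat) (v : 'I_n -> R) (p : {mpoly R[n]}) :
  meval v p != 0 -> p != 0.
Proof. by apply: contra => /eqP ->; rewrite meval0. Qed.

Section CompLemmas.
Variables (R : comNzRingType) (n n' : nat) (lq : n.-tuple {mpoly R[n']}).
Lemma compM (p q : {mpoly R[n]}) : (p * q) \mPo lq = (p \mPo lq) * (q \mPo lq).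
Proof. exact: rmorphM. Qed.
Lemma compD (p q : {mpoly R[n]}) : (p + q) \mPo lq = (p \mPo lq) + (q \mPo lq).
Proof. exact: rmorphD. Qed.
Lemma compB (p q : {mpoly R[n]}) : (p - q) \mPo lq = (p \mPo lq) - (q \mPo lq).
Proof. exact: rmorphB. Qed.
Lemma compN (p : {mpoly R[n]}) : (- p) \mPo lq = - (p \mPo lq).
Proof. exact: rmorphN. Qed.
Lemma compXn (p : {mpoly R[n]}) e : (p ^+ e) \mPo lq = (p \mPo lq) ^+ e.
Proof. exact: rmorphXn. Qed.
Lemma comp1 : (1 : {mpoly R[n]}) \mPo lq = 1.
Proof. exact: rmorph1. Qed.
Lemma comp0 : (0 : {mpoly R[n]}) \mPo lq = 0.
Proof. exact: rmorph0. Qed.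
End CompLemmas.

Section Main.
Variable k : fieldType.
Local Notation P8 := {mpoly k[8]}.
Definition xv (j : nat) : P8 := 'X_(inord j).
Local Notation x0 := (xv 0). Local Notation x1 := (xv 1).
Local Notation x2 := (xv 2). Local Notation x3 := (xv 3).
Local Notation y0 := (xv 4). Local Notation y1 := (xv 5).
Local Notation y2 := (xv 6). Local Notation y3 := (xv 7).
Definition DXp : P8 := x0 * x3 - x1 * x2 - 1.
Definition DYp : P8 := y0 * y3 - y1 * y2 - 1.
Definition E00p : P8 := x1 * y2 - y1 * x2.
Definition E01p : P8 := x1 * (y3 - y0) - y1 * (x3 - x0).
Definition E10p : P8 := y2 * (x3 - x0) - x2 * (y3 - y0).
Definition G5 (i : 'I_5) : P8 :=
  match val i with 0 => DXp | 1 => DYp | 2 => E00p | 3 => E01p | _ => E10p end.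
Local Notation C00 := (CM00e x0 x1 x2 x3 y0 y1 y2 y3).
Local Notation C01 := (CM01e x0 x1 x2 x3 y0 y1 y2 y3).
Local Notation C10 := (CM10e x0 x1 x2 x3 y0 y1 y2 y3).
Local Notation C11 := (CM11e x0 x1 x2 x3 y0 y1 y2 y3).

Lemma G5i j : (j < 5)%N -> G5 (inord j) = match j with 0 => DXp | 1 => DYp | 2 => E00p | 3 => E01p | _ => E10p end.
Proof. by move=> hj; rewrite /G5 /= inordK. Qed.

Lemma G_lin a0 a1 a2 a3 a4 :
  in_ideal G5 (a0 * DXp + a1 * DYp + a2 * E00p + a3 * E01p + a4 * E10p).
Proof.
rewrite -(G5i (j := 0)) // -(G5i (j := 1)) // -(G5i (j := 2)) // -(G5i (j := 3)) // -(G5i (j := 4)) //.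
by repeat apply: in_idealD; apply: in_ideal_gen_mul.
Qed.

Lemma SIe (i : 'I_6) : SI_eqs k i =
  match val i with 0 => DXp | 1 => DYp | 2 => C00 | 3 => C01 | 4 => C10 | _ => C11 end.
Proof.
have eX : matX k = MB (fun i j => xv (2 * i + j)) by [].
have eY : matY k = MC (fun i j => xv (4 + 2 * i + j)) by [].
have eC : matX k *m matY k *m \adj (matX k) *m \adj (matY k) - 1%:M
   = CM (fun i j => xv (2 * i + j)) (fun i j => xv (4 + 2 * i + j)) by [].
rewrite /SI_eqs; case: i => [[|[|[|[|[|[|i]]]]]] hi] //=.
- by rewrite eX detMB.
- by rewrite eY detMC.
- by rewrite eC CM00.
- by rewrite eC CM01.
- by rewrite eC CM10.
- by rewrite eC CM11.
Qed.

Lemma SIi j : (j < 6)%N -> SI_eqs k (inord j) =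
  match j with 0 => DXp | 1 => DYp | 2 => C00 | 3 => C01 | 4 => C10 | _ => C11 end.
Proof. by move=> hj; rewrite SIe /= inordK. Qed.

Lemma I_lin b0 b1 b2 b3 b4 b5 :
  in_ideal (SI_eqs k) (b0 * DXp + b1 * DYp + b2 * C00 + b3 * C01 + b4 * C10 + b5 * C11).
Proof.
rewrite -(SIi (j := 0)) // -(SIi (j := 1)) // -(SIi (j := 2)) // -(SIi (j := 3)) // -(SIi (j := 4)) // -(SIi (j := 5)) //.
by repeat apply: in_idealD; apply: in_ideal_gen_mul.
Qed.

Lemma G_sub_I j : in_ideal (SI_eqs k) (G5 j).
Proof.
rewrite /G5; case: j => [[|[|[|[|[|j]]]]] hj] //=.
- have -> : DXp = 1 * DXp + 0 * DYp + 0 * C00 + 0 * C01 + 0 * C10 + 0 * C11 by ring.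
  exact: I_lin.
- have -> : DYp = 0 * DXp + 1 * DYp + 0 * C00 + 0 * C01 + 0 * C10 + 0 * C11 by ring.
  exact: I_lin.
- have -> : E00p = (- (DYp + 1) * (x0 * y0 + x1 * y2)) * DXp + (- (x0 * y0 + x1 * y2)) * DYp
     + (y0 * x0 + y1 * x2) * C00 + (y2 * x0 + y3 * x2) * C01 + 0 * C10 + 0 * C11.
    by rewrite /DXp /DYp /E00p /CM00e /CM01e; ring.
  exact: I_lin.
- have -> : E01p = (- (DYp + 1) * (x0 * y1 + x1 * y3)) * DXp + (- (x0 * y1 + x1 * y3)) * DYp
     + (y0 * x1 + y1 * x3) * C00 + (y2 * x1 + y3 * x3) * C01 + 0 * C10 + 0 * C11.
    by rewrite /DXp /DYp /E01p /CM00e /CM01e; ring.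
  exact: I_lin.
- have -> : E10p = (- (DYp + 1) * (x2 * y0 + x3 * y2)) * DXp + (- (x2 * y0 + x3 * y2)) * DYp
     + 0 * C00 + 0 * C01 + (y0 * x0 + y1 * x2) * C10 + (y2 * x0 + y3 * x2) * C11.
    by rewrite /DXp /DYp /E10p /CM10e /CM11e; ring.
  exact: I_lin.
Qed.

Lemma I_sub_G i : in_ideal G5 (SI_eqs k i).
Proof.
rewrite SIe; case: i => [[|[|[|[|[|[|i]]]]]] hi] //=.
- have -> : DXp = 1 * DXp + 0 * DYp + 0 * E00p + 0 * E01p + 0 * E10p by ring.
  exact: G_lin.
- have -> : DYp = 0 * DXp + 1 * DYp + 0 * E00p + 0 * E01p + 0 * E10p by ring.
  exact: G_lin.
- have -> : C00 = (DYp + 1) * DXp + 1 * DYp + (x3 * y3 + x1 * y2) * E00p + (- x2 * y3 - x0 * y2) * E01p + 0 * E10p.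
    by rewrite /DXp /DYp /E00p /E01p /E10p /CM00e; ring.
  exact: G_lin.
- have -> : C01 = 0 * DXp + 0 * DYp + (- x3 * y1 - x1 * y0) * E00p + (x2 * y1 + x0 * y0) * E01p + 0 * E10p.
    by rewrite /DXp /DYp /E00p /E01p /E10p /CM01e; ring.
  exact: G_lin.
- have -> : C10 = 0 * DXp + 0 * DYp + (x2 * y3 + x0 * y2) * E00p + 0 * E01p + (x3 * y3 + x1 * y2) * E10p.
    by rewrite /DXp /DYp /E00p /E01p /E10p /CM10e; ring.
  exact: G_lin.
- have -> : C11 = (DYp + 1) * DXp + 1 * DYp + (- x2 * y1 - x0 * y0) * E00p + 0 * E01p + (- x3 * y1 - x1 * y0) * E10p.
    by rewrite /DXp /DYp /E00p /E01p /E10p /CM11e; ring.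
  exact: G_lin.
Qed.

Lemma IG p : in_ideal (SI_eqs k) p <-> in_ideal G5 p.
Proof. split; apply: in_ideal_trans; [exact: I_sub_G | exact: G_sub_I]. Qed.

End Main.

Definition hvals (F : fieldType) (T0 T1 T2 T3 : F) (j : nat) : F :=
  let S := (T1 ^+ 2 - T2 ^+ 2 - T3 ^+ 2) / (T2 * T3) in
  let x3 := S - T0 in
  let x2 := (T0 * x3 - 1) / T1 in
  match j with
  | 0 => T0 | 1 => T1 | 2 => x2 | 3 => x3
  | 4 => (T2 + T3 * T0) / T1 | 5 => T3 | 6 => T3 / T1 * x2 | _ => (T2 + T3 * x3) / T1
  end.

Lemma hvals_ok (F : fieldType) (T0 T1 T2 T3 : F) : T1 != 0 -> T2 != 0 -> T3 != 0 ->
 let v := hvals T0 T1 T2 T3 in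
 (v 0%N * v 3%N - v 1%N * v 2%N - 1 = 0) /\ (v 4%N * v 7%N - v 5%N * v 6%N - 1 = 0) /\
     (v 1%N * v 6%N - v 5%N * v 2%N = 0) /\ (v 1%N * (v 7%N - v 4%N) - v 5%N * (v 3%N - v 0%N) = 0) /\
     (v 6%N * (v 3%N - v 0%N) - v 2%N * (v 7%N - v 4%N) = 0) /\ (v 1%N * v 4%N - v 5%N * v 0%N = T2).
Proof.
move=> h1 h2 h3 /=; rewrite /hvals /=; repeat split; field; by rewrite ?h1 ?h2 ?h3.
Qed.

Section Ev.
Variable k : fieldType.
Local Notation P8 := {mpoly k[8]}.
Local Notation R4 := (ratfun k 4).
Local Notation xv := (@xv k).
Local Notation x0 := (xv 0). Local Notation x1 := (xv 1).
Local Notation x2 := (xv 2). Local Notation x3 := (xv 3).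
Local Notation y0 := (xv 4). Local Notation y1 := (xv 5).
Local Notation y2 := (xv 6). Local Notation y3 := (xv 7).

Definition Tv (j : nat) : R4 := FracField.tofrac ('X_(inord j) : {mpoly k[4]}).
Definition hh : 'I_8 -> R4 := fun i => hvals (Tv 0) (Tv 1) (Tv 2) (Tv 3) i.
Definition fC : k -> R4 := (@FracField.tofrac _) \o (@mpolyC 4 k).
Local Notation ev := (ev_ratfun hh).
Local Notation G5 := (@G5 k).

Lemma evE p : ev p = mmap fC hh p. Proof. reflexivity. Qed.
Lemma evD p q : ev (p + q) = ev p + ev q. Proof. by rewrite !evE rmorphD. Qed.
Lemma evB p q : ev (p - q) = ev p - ev q. Proof. by rewrite !evE rmorphB. Qed.
Lemma evN p : ev (- p) = - ev p. Proof. by rewrite !evE rmorphN. Qed.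
Lemma evM p q : ev (p * q) = ev p * ev q. Proof. by rewrite !evE rmorphM. Qed.
Lemma ev0 : ev 0 = 0. Proof. by rewrite !evE rmorph0. Qed.
Lemma ev1 : ev 1 = 1. Proof. by rewrite !evE rmorph1. Qed.
Lemma evXn p e : ev (p ^+ e) = ev p ^+ e. Proof. by rewrite !evE rmorphXn. Qed.
Lemma evC c : ev c%:MP = FracField.tofrac c%:MP. Proof. by rewrite evE mmapC. Qed.
Lemma evXi (i : 'I_8) : ev 'X_i = hh i. Proof. by rewrite evE mmapX mmap1U. Qed.
Lemma evx j : (j < 8)%N -> ev (xv j) = hvals (Tv 0) (Tv 1) (Tv 2) (Tv 3) j.
Proof. by move=> hj; rewrite /xv evXi /hh inordK. Qed.

Lemma Tv_neq0 j : (j < 4)%N -> Tv j != 0.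
Proof.
move=> hj; rewrite /Tv tofrac_eq0; apply: (@nz_meval _ _ (fun=> 1)).
by rewrite mevalXU oner_neq0.
Qed.

Ltac evs := rewrite ?(evD, evB, evN, evM, ev1, evXn) ?evx //.

Lemma ev_G5 j : ev (G5 j) = 0.
Proof.
have [h0 [h1 [h2 [h3 [h4 _]]]]] := hvals_ok (Tv 0) (Tv_neq0 (j:=1) isT) (Tv_neq0 (j:=2) isT) (Tv_neq0 (j:=3) isT).
rewrite /G5; case: j => [[|[|[|[|[|j]]]]] hj] //=.
- by rewrite /DXp; evs.
- by rewrite /DYp; evs.
- by rewrite /E00p; evs.
- by rewrite /E01p; evs.
- by rewrite /E10p; evs.
Qed.

Lemma ev_c : ev (x1 * y0 - y1 * x0) = Tv 2.
Proof.
have [_ [_ [_ [_ [_ h5]]]]] := hvals_ok (Tv 0) (Tv_neq0 (j:=1) isT) (Tv_neq0 (j:=2) isT) (Tv_neq0 (j:=3) isT).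
by evs.
Qed.

Lemma ev_Gideal p : in_ideal G5 p -> ev p = 0.
Proof.
move=> [c ->]; rewrite (big_morph ev evD ev0) big1 // => i _.
by rewrite evM ev_G5 mulr0.
Qed.

Lemma ev_Iideal p : in_ideal (SI_eqs k) p -> ev p = 0.
Proof. by move/IG; apply: ev_Gideal. Qed.

Lemma rad_ev p : in_radical (SI_eqs k) p -> ev p = 0.
Proof. by move=> [e /ev_Iideal]; rewrite evXn => /eqP; rewrite expf_eq0 => /andP [_ /eqP]. Qed.

End Ev.

Lemma var_case (R : comNzRingType) (n : nat) (P : {mpoly R[n.+1]} -> Prop) :
  (forall j, (j <= n)%N -> P 'X_(inord j)) -> forall i, P 'X_i.
Proof. by move=> h i; rewrite -[i]inord_val; apply: h; rewrite -ltnS. Qed.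

Lemma compX (R : comNzRingType) (n n' : nat) (lq : n.-tuple {mpoly R[n']}) i :
  'X_i \mPo lq = tnth lq i.
Proof. by rewrite /comp_mpoly mmapX mmap1U. Qed.

Section Steps.
Variable R : comNzRingType.
Lemma addstep (u F a b H H' r r' : R) N M :
  u ^+ N * a = F * H + r -> u ^+ M * b = F * H' + r' ->
  u ^+ (N + M) * (a + b) = F * (u ^+ M * H + u ^+ N * H') + (u ^+ M * r + u ^+ N * r').
Proof.
move=> e1 e2; have -> : u ^+ (N + M) * (a + b) = u ^+ M * (u ^+ N * a) + u ^+ N * (u ^+ M * b).
  by rewrite exprD; ring.
by rewrite e1 e2; ring.
Qed.
Lemma mulstep (u F a b H H' r r' : R) N M :
  u ^+ N * a = F * H + r -> u ^+ M * b = F * H' + r' ->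
  u ^+ (N + M) * (a * b) = F * (H * (F * H' + r') + r * H') + r * r'.
Proof.
move=> e1 e2; have -> : u ^+ (N + M) * (a * b) = (u ^+ N * a) * (u ^+ M * b).
  by rewrite exprD; ring.
by rewrite e1 e2; ring.
Qed.
Lemma addstep2 (u a b A B : R) N M :
  u ^+ (N + M) * (a + b) - (u ^+ M * A + u ^+ N * B) = u ^+ M * (u ^+ N * a - A) + u ^+ N * (u ^+ M * b - B).
Proof. by rewrite exprD; ring. Qed.
Lemma mulstep2 (u a b A B : R) N M :
  u ^+ (N + M) * (a * b) - A * B = (u ^+ N * a - A) * (u ^+ M * b) + A * (u ^+ M * b - B).
Proof. by rewrite exprD; ring. Qed.
End Steps.

Section Chart.
Variable k : fieldType.
Local Notation P8 := {mpoly k[8]}.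
Local Notation P5 := {mpoly k[5]}.
Local Notation P4 := {mpoly k[4]}.
Local Notation xv := (@xv k).
Local Notation x0 := (xv 0). Local Notation x1 := (xv 1).
Local Notation x2 := (xv 2). Local Notation x3 := (xv 3).
Local Notation y0 := (xv 4). Local Notation y1 := (xv 5).
Local Notation y2 := (xv 6). Local Notation y3 := (xv 7).
Local Notation G5 := (@G5 k).
Local Notation DXp := (@DXp k). Local Notation DYp := (@DYp k).
Local Notation E00p := (@E00p k). Local Notation E01p := (@E01p k). Local Notation E10p := (@E10p k).
Local Notation ev := (ev_ratfun (@hh k)).

Definition tv (j : nat) : P5 := 'X_(inord j).
Definition Tp (j : nat) : P4 := 'X_(inord j).
Definition lPhi : 5.-tuple P8 := [tuple x0; x1; x0 + x3; x1 * y0 - y1 * x0; y1].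
Definition lTh : 4.-tuple P5 := [tuple tv 0; tv 1; tv 3; tv 4].
Local Notation Phi q := (q \mPo lPhi).
Local Notation Th r := (r \mPo lTh).
Definition Ft : P5 := tv 3 ^+ 2 + tv 2 * tv 3 * tv 4 + tv 4 ^+ 2 - tv 1 ^+ 2.

Ltac sub := rewrite ?(rmorphD, rmorphB, rmorphM, rmorph1, rmorphN, rmorphXn, comp_mpolyC) /=; repeat (rewrite xsub //); rewrite /= ?/lPhi ?/lTh /=.

Lemma chart1 p : exists N q, in_ideal G5 (x1 ^+ N * p - Phi q).
Proof.
elim/mpoly_ind_ring: p.
- move=> c; exists 0%N, c%:MP; rewrite comp_mpolyC expr0 mul1r subrr; exact: in_ideal0.
- apply: (@var_case k 7 (fun p => exists N q, in_ideal G5 (x1 ^+ N * p - Phi q))) => j hj.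
  do 8?[case: j hj => [|j] hj]; last by [].
  + exists 0%N, (tv 0); rewrite /tv; sub; rewrite expr0 mul1r subrr; exact: in_ideal0.
  + exists 0%N, (tv 1); rewrite /tv; sub; rewrite expr0 mul1r subrr; exact: in_ideal0.
  + exists 1%N, (tv 0 * (tv 2 - tv 0) - 1); rewrite /tv; sub.
    have -> : x1 ^+ 1 * xv 2 - (x0 * (x0 + x3 - x0) - 1) = (-1) * DXp + 0 * DYp + 0 * E00p + 0 * E01p + 0 * E10p.
      by rewrite /DXp; ring.
    exact: G_lin.
  + exists 0%N, (tv 2 - tv 0); rewrite /tv; sub.
    have -> : x1 ^+ 0 * xv 3 - (x0 + x3 - x0) = 0 by ring.
    exact: in_ideal0.
  + exists 1%N, (tv 3 + tv 4 * tv 0); rewrite /tv; sub.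
    have -> : x1 ^+ 1 * xv 4 - (x1 * y0 - y1 * x0 + y1 * x0) = 0 by ring.
    exact: in_ideal0.
  + exists 0%N, (tv 4); rewrite /tv; sub; rewrite expr0 mul1r subrr; exact: in_ideal0.
  + exists 2%N, (tv 4 * (tv 0 * (tv 2 - tv 0) - 1)); rewrite /tv; sub.
    have -> : x1 ^+ 2 * xv 6 - y1 * (x0 * (x0 + x3 - x0) - 1) = (- y1) * DXp + 0 * DYp + x1 * E00p + 0 * E01p + 0 * E10p.
      by rewrite /DXp /E00p; ring.
    exact: G_lin.
  + exists 1%N, (tv 3 + tv 4 * (tv 2 - tv 0)); rewrite /tv; sub.
    have -> : x1 ^+ 1 * xv 7 - (x1 * y0 - y1 * x0 + y1 * (x0 + x3 - x0)) = 0 * DXp + 0 * DYp + 0 * E00p + 1 * E01p + 0 * E10p.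
      by rewrite /E01p; ring.
    exact: G_lin.
- move=> p q [N [a ha]] [M [b hb]]; exists (N + M)%N, (tv 1 ^+ M * a + tv 1 ^+ N * b).
  rewrite rmorphD !rmorphM !rmorphXn /= /tv xsub //= addstep2.
  by apply: in_idealD; apply: in_idealMl.
- move=> p q [N [a ha]] [M [b hb]]; exists (N + M)%N, (a * b).
  rewrite rmorphM /= mulstep2; apply: in_idealD; first by rewrite mulrC; apply: in_idealMl.
  by apply: in_idealMl.
Qed.


Lemma chart2 q : exists N H r, (tv 3 * tv 4) ^+ N * q = Ft * H + Th r.
Proof.
elim/mpoly_ind_ring: q.
- move=> c; exists 0%N, 0, c%:MP; by rewrite comp_mpolyC expr0 mul1r mulr0 add0r.
- apply: (@var_case k 4 (fun q => exists N H r, (tv 3 * tv 4) ^+ N * q = Ft * H + Th r)) => j hj.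
  do 5?[case: j hj => [|j] hj]; last by [].
  + exists 0%N, 0, (Tp 0); rewrite /Tp; sub; by rewrite expr0 mul1r mulr0 add0r.
  + exists 0%N, 0, (Tp 1); rewrite /Tp; sub; by rewrite expr0 mul1r mulr0 add0r.
  + exists 1%N, 1, (Tp 1 ^+ 2 - Tp 2 ^+ 2 - Tp 3 ^+ 2); rewrite /Tp; sub; rewrite /Ft /tv; ring.
  + exists 0%N, 0, (Tp 2); rewrite /Tp; sub; by rewrite expr0 mul1r mulr0 add0r.
  + exists 0%N, 0, (Tp 3); rewrite /Tp; sub; by rewrite expr0 mul1r mulr0 add0r.
- move=> p q [N [H [r e1]]] [M [H' [r' e2]]].
  exists (N + M)%N, ((tv 3 * tv 4) ^+ M * H + (tv 3 * tv 4) ^+ N * H'), ((Tp 2 * Tp 3) ^+ M * r + (Tp 2 * Tp 3) ^+ N * r').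
  have -> : Th ((Tp 2 * Tp 3) ^+ M * r + (Tp 2 * Tp 3) ^+ N * r') = (tv 3 * tv 4) ^+ M * Th r + (tv 3 * tv 4) ^+ N * Th r'.
    by rewrite /Tp; sub.
  exact: addstep.
- move=> p q [N [H [r e1]]] [M [H' [r' e2]]].
  exists (N + M)%N, (H * (Ft * H' + Th r') + Th r * H'), (r * r').
  rewrite rmorphM /=; exact: mulstep.
Qed.

Lemma PhiFt_G : in_ideal G5 (Phi Ft).
Proof.
have -> : Phi Ft = (- y1 ^+ 2) * DXp + (x1 ^+ 2) * DYp + (x1 * y1) * E00p + (- x1 * y0) * E01p + 0 * E10p.
  by rewrite /Ft /tv; sub; rewrite /DXp /DYp /E00p /E01p; ring.
exact: G_lin.
Qed.

Lemma evPT r : ev (Phi (Th r)) = FracField.tofrac r.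
Proof.
elim/mpoly_ind_ring: r.
- by move=> c; rewrite !comp_mpolyC evC.
- apply: (@var_case k 3 (fun r => ev (Phi (Th r)) = FracField.tofrac r)) => j hj.
  do 4?[case: j hj => [|j] hj]; last by [].
  + by rewrite /tv; sub; rewrite evx.
  + by rewrite /tv; sub; rewrite evx.
  + by rewrite /tv; sub; rewrite ev_c.
  + by rewrite /tv; sub; rewrite evx.
- by move=> p q e1 e2; rewrite !rmorphD /= evD e1 e2.
- by move=> p q e1 e2; rewrite !rmorphM /= evM e1 e2.
Qed.


End Chart.

Section Chart2.
Variable k : fieldType.
Local Notation P8 := {mpoly k[8]}.
Local Notation P5 := {mpoly k[5]}.
Local Notation P4 := {mpoly k[4]}.
Local Notation xv := (@xv k).
Local Notation x0 := (xv 0). Local Notation x1 := (xv 1).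
Local Notation x2 := (xv 2). Local Notation x3 := (xv 3).
Local Notation y0 := (xv 4). Local Notation y1 := (xv 5).
Local Notation y2 := (xv 6). Local Notation y3 := (xv 7).
Local Notation G5 := (@G5 k).
Local Notation DXp := (@DXp k). Local Notation DYp := (@DYp k).
Local Notation E00p := (@E00p k). Local Notation E01p := (@E01p k). Local Notation E10p := (@E10p k).
Local Notation ev := (ev_ratfun (@hh k)).

Local Notation Phi q := (q \mPo (@lPhi k)).
Local Notation Th r := (r \mPo (@lTh k)).
Local Notation tv := (@tv k).
Local Notation Tp := (@Tp k).
Local Notation Ft := (@Ft k).
Ltac sub := rewrite ?(rmorphD, rmorphB, rmorphM, rmorph1, rmorphN, rmorphXn, comp_mpolyC) /=; repeat (rewrite xsub //); rewrite /= ?/lPhi ?/lTh ?/tv /=.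
Lemma tv_neq0 j : (j < 5)%N -> tv j != 0.
Proof. move=> hj; apply: (@nz_meval _ _ (fun=> 1)); by rewrite mevalXU oner_neq0. Qed.

Lemma decomp (lq : 5.-tuple P5) j : (j < 5)%N -> lq`_j = 0 ->
  (forall i, (i < 5)%N -> i != j -> lq`_i = tv i) ->
  forall H : P5, exists H' : P5, H = H \mPo lq + tv j * H'.
Proof.
move=> hj hz hi; elim/mpoly_ind_ring.
- by move=> c; exists 0; rewrite comp_mpolyC mulr0 addr0.
- apply: (@var_case k 4 (fun H : P5 => exists H' : P5, H = H \mPo lq + tv j * H')) => i hi5.
  rewrite xsub //; have [->|nij] := eqVneq i j.
    by exists 1; rewrite hz add0r mulr1.
  by exists 0; rewrite hi // mulr0 addr0.
- move=> p q [A eA] [B eB]; exists (A + B); rewrite rmorphD /=.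
  by rewrite {1}eA {1}eB; ring.
- move=> p q [A eA] [B eB]; exists (A * (q \mPo lq) + (p \mPo lq) * B + tv j * A * B).
  rewrite rmorphM /= {1}eA {1}eB; ring.
Qed.

Lemma peel (lq : 5.-tuple P5) j : (j < 5)%N -> lq`_j = 0 ->
  (forall i, (i < 5)%N -> i != j -> lq`_i = tv i) -> Ft \mPo lq != 0 ->
  forall a H : P5, tv j * a = Ft * H -> exists H' : P5, a = Ft * H'.
Proof.
move=> hj hz hi nzF a H e.
have [H' eH] := decomp hj hz hi H.
have e2 := congr1 (comp_mpoly lq) e.
have tz : tv j \mPo lq = 0 by rewrite /tv xsub ?hz //; exact: hj.
rewrite !compM tz mul0r in e2.
move/esym/eqP: e2; rewrite mulf_eq0 (negbTE nzF) /= => /eqP HZ.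
rewrite HZ add0r in eH; exists H'; apply/eqP; rewrite -subr_eq0.
have : tv j * (a - Ft * H') == 0.
  by rewrite mulrBr e eH mulrCA subrr.
by rewrite mulf_eq0 (negbTE (tv_neq0 hj)).
Qed.

Definition Z3 : 5.-tuple P5 := [tuple tv 0; tv 1; tv 2; 0; tv 4].
Definition Z4 : 5.-tuple P5 := [tuple tv 0; tv 1; tv 2; tv 3; 0].

Lemma FtZ3 : Ft \mPo Z3 != 0.
Proof.
apply: (@nz_meval _ _ (fun i => if val i == 4%N then 1 else 0)).
rewrite /Ft !(compD, compB, compN, compM, compXn) /tv !xsub // /Z3 /= /tv.
rewrite ?expr2 !(mevalD, mevalN, mevalB, mevalM, meval0, mevalXU) !inordK //=.
by rewrite !(mul0r, mulr0, add0r, addr0, subr0, mulr1) oner_neq0.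
Qed.

Lemma FtZ4 : Ft \mPo Z4 != 0.
Proof.
apply: (@nz_meval _ _ (fun i => if val i == 3%N then 1 else 0)).
rewrite /Ft !(compD, compB, compN, compM, compXn) /tv !xsub // /Z4 /= /tv.
rewrite ?expr2 !(mevalD, mevalN, mevalB, mevalM, meval0, mevalXU) !inordK //=.
by rewrite !(mul0r, mulr0, add0r, addr0, subr0, mulr1) oner_neq0.
Qed.

Lemma peel3 a H : tv 3 * a = Ft * H -> exists H' : P5, a = Ft * H'.
Proof.
apply: (@peel Z3) => //; last exact: FtZ3.
by move=> i hi hij; do 5?[case: i hi hij => [|i] hi hij] => //.
Qed.

Lemma peel4 a H : tv 4 * a = Ft * H -> exists H' : P5, a = Ft * H'.
Proof.
apply: (@peel Z4) => //; last exact: FtZ4.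
by move=> i hi hij; do 5?[case: i hi hij => [|i] hi hij] => //.
Qed.

Lemma cancel_all N : forall q H : P5, (tv 3 * tv 4) ^+ N * q = Ft * H -> exists H' : P5, q = Ft * H'.
Proof.
elim: N => [|N IH] q H e.
  by exists H; rewrite -e expr0 mul1r.
have E : tv 3 * (tv 4 * ((tv 3 * tv 4) ^+ N * q)) = (tv 3 * tv 4) ^+ N.+1 * q.
  by rewrite exprS; ring.
have [H1 e1] := peel3 (etrans E e).
have [H2 e2] := peel4 e1.
exact: (IH q H2 e2).
Qed.
End Chart2.

Section Chart3.
Variable k : fieldType.
Local Notation P8 := {mpoly k[8]}.
Local Notation P5 := {mpoly k[5]}.
Local Notation P4 := {mpoly k[4]}.
Local Notation xv := (@xv k).
Local Notation x0 := (xv 0). Local Notation x1 := (xv 1).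
Local Notation x2 := (xv 2). Local Notation x3 := (xv 3).
Local Notation y0 := (xv 4). Local Notation y1 := (xv 5).
Local Notation y2 := (xv 6). Local Notation y3 := (xv 7).
Local Notation G5 := (@G5 k).
Local Notation DXp := (@DXp k). Local Notation DYp := (@DYp k).
Local Notation E00p := (@E00p k). Local Notation E01p := (@E01p k). Local Notation E10p := (@E10p k).
Local Notation ev := (ev_ratfun (@hh k)).

Local Notation Phi q := (q \mPo (@lPhi k)).
Local Notation Th r := (r \mPo (@lTh k)).
Local Notation tv := (@tv k).
Local Notation Tp := (@Tp k).
Local Notation Ft := (@Ft k).
Ltac sub := rewrite ?(rmorphD, rmorphB, rmorphM, rmorph1, rmorphN, rmorphXn, comp_mpolyC) /=; repeat (rewrite xsub //); rewrite /= ?/lPhi ?/lTh ?/tv /=.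

Lemma chart p : ev p = 0 -> exists N, in_ideal G5 (x1 ^+ N * p).
Proof.
move=> hp; have [N [q hq]] := chart1 p; have [M [H [r e]]] := chart2 q.
have hPq : ev (Phi q) = 0.
  move: (ev_Gideal hq); rewrite evB evM hp mulr0 sub0r => /eqP; rewrite oppr_eq0 => /eqP //.
have hr : r = 0.
  have L : ev (Phi ((tv 3 * tv 4) ^+ M * q)) = 0 by rewrite compM evM hPq mulr0.
  have R : ev (Phi (Ft * H + Th r)) = FracField.tofrac r.
    by rewrite compD compM evD evM (ev_Gideal (@PhiFt_G k)) mul0r add0r evPT.
  have := congr1 (fun z => ev (Phi z)) e; rewrite /= L R => /esym/eqP.
  by rewrite tofrac_eq0 => /eqP.
rewrite hr comp0 addr0 in e.
have [H' eq] := cancel_all e.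
exists N; have -> : x1 ^+ N * p = (x1 ^+ N * p - Phi q) + Phi q by rewrite subrK.
apply: in_idealD => //; rewrite eq compM mulrC; exact: in_idealMl (@PhiFt_G k).
Qed.

End Chart3.

Section Sym.
Variable k : fieldType.
Local Notation P8 := {mpoly k[8]}.
Local Notation P5 := {mpoly k[5]}.
Local Notation P4 := {mpoly k[4]}.
Local Notation xv := (@xv k).
Local Notation x0 := (xv 0). Local Notation x1 := (xv 1).
Local Notation x2 := (xv 2). Local Notation x3 := (xv 3).
Local Notation y0 := (xv 4). Local Notation y1 := (xv 5).
Local Notation y2 := (xv 6). Local Notation y3 := (xv 7).
Local Notation G5 := (@G5 k).
Local Notation DXp := (@DXp k). Local Notation DYp := (@DYp k).
Local Notation E00p := (@E00p k). Local Notation E01p := (@E01p k). Local Notation E10p := (@E10p k).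
Local Notation ev := (ev_ratfun (@hh k)).

Local Notation Phi q := (q \mPo (@lPhi k)).
Local Notation Th r := (r \mPo (@lTh k)).
Local Notation tv := (@tv k).
Local Notation Tp := (@Tp k).
Local Notation Ft := (@Ft k).

Local Notation Q u := (forall p : P8, ev p = 0 -> exists N, in_ideal G5 (u ^+ N * p)).

Lemma Qx1 : Q x1. Proof. exact: chart. Qed.

Lemma G5_stable (lq : 8.-tuple P8) :
  (forall j, in_ideal G5 (G5 j \mPo lq)) -> forall p, in_ideal G5 p -> in_ideal G5 (p \mPo lq).
Proof.
move=> h p hp; apply: (in_ideal_trans h).
exact: (@in_ideal_mor _ _ _ _ (comp_mpoly lq) _ _ hp).
Qed.

Lemma G5_curve (lg : 8.-tuple {mpoly k[1]}) :
  (forall j, G5 j \mPo lg = 0) -> forall p, in_ideal G5 p -> p \mPo lg = 0.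
Proof.
move=> h p [c ->]; rewrite (big_morph (comp_mpoly lg) (@compD _ _ _ lg) (@comp0 _ _ _ lg)).
by rewrite big1 // => i _; rewrite compM h mulr0.
Qed.

Lemma curve_zero (lg : 8.-tuple {mpoly k[1]}) u :
  (forall j, G5 j \mPo lg = 0) -> Q u -> u \mPo lg != 0 ->
  forall p, ev p = 0 -> p \mPo lg = 0.
Proof.
move=> hg hQ hu p hp; have [N hN] := hQ p hp.
have := G5_curve hg hN; rewrite compM compXn => /eqP; rewrite mulf_eq0 expf_eq0 (negbTE hu) andbF /=.
by move/eqP.
Qed.

Lemma transfer (lq lq' : 8.-tuple P8) u :
  (forall j, in_ideal G5 (G5 j \mPo lq)) -> (forall j, in_ideal G5 (G5 j \mPo lq')) ->
  (forall p : P8, (p \mPo lq) \mPo lq' = p) -> ev (u \mPo lq) != 0 ->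
  Q u -> Q (u \mPo lq').
Proof.
move=> h1 h2 h3 hu hQ p hp.
have [N hN] := hQ p hp.
have hs : ev (p \mPo lq) = 0.
  move: (ev_Gideal (G5_stable h1 hN)); rewrite compM compXn evM evXn => /eqP.
  by rewrite mulf_eq0 expf_eq0 (negbTE hu) andbF /= => /eqP.
have [M hM] := hQ _ hs.
exists M; have := G5_stable h2 hM; by rewrite compM compXn h3.
Qed.

End Sym.

Section Sym2.
Variable k : fieldType.
Local Notation P8 := {mpoly k[8]}.
Local Notation P5 := {mpoly k[5]}.
Local Notation P4 := {mpoly k[4]}.
Local Notation xv := (@xv k).
Local Notation x0 := (xv 0). Local Notation x1 := (xv 1).
Local Notation x2 := (xv 2). Local Notation x3 := (xv 3).
Local Notation y0 := (xv 4). Local Notation y1 := (xv 5).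
Local Notation y2 := (xv 6). Local Notation y3 := (xv 7).
Local Notation G5 := (@G5 k).
Local Notation DXp := (@DXp k). Local Notation DYp := (@DYp k).
Local Notation E00p := (@E00p k). Local Notation E01p := (@E01p k). Local Notation E10p := (@E10p k).
Local Notation ev := (ev_ratfun (@hh k)).

Local Notation Phi q := (q \mPo (@lPhi k)).
Local Notation Th r := (r \mPo (@lTh k)).
Local Notation tv := (@tv k).
Local Notation Tp := (@Tp k).
Local Notation Ft := (@Ft k).

Local Notation Q u := (forall p : P8, ev p = 0 -> exists N, in_ideal G5 (u ^+ N * p)).


Definition sT : 8.-tuple P8 := [tuple x0; x2; x1; x3; y0; y2; y1; y3].
Definition sS : 8.-tuple P8 := [tuple y0; y1; y2; y3; x0; x1; x2; x3].
Definition sC : 8.-tuple P8 := [tuple x0 + x2; x1 + x3 - x0 - x2; x2; x3 - x2; y0 + y2; y1 + y3 - y0 - y2; y2; y3 - y2].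
Definition sC' : 8.-tuple P8 := [tuple x0 - x2; x1 + x0 - x2 - x3; x2; x3 + x2; y0 - y2; y1 + y0 - y2 - y3; y2; y3 + y2].
Definition zz : {mpoly k[1]} := 'X_(inord 0).
Definition g0 : 8.-tuple {mpoly k[1]} := [tuple 1; zz; zz; 1 + zz ^+ 2; 1; zz; zz; 1 + zz ^+ 2].

Ltac csub := rewrite ?(compD, compB, compM, compN, compXn, comp1, comp_mpolyC) /xv;
  repeat (rewrite xsub //); rewrite /= ?/sT ?/sS ?/sC ?/sC' ?/g0 /= ?/xv.

Lemma zz_neq0 : zz != 0.
Proof. by apply: (@nz_meval _ _ (fun=> 1)); rewrite /zz mevalXU oner_neq0. Qed.

Lemma g0_G j : G5 j \mPo g0 = 0.
Proof.
rewrite /G5; case: j => [[|[|[|[|[|j]]]]] hj] //=.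
- by rewrite /DXp; csub; ring.
- by rewrite /DYp; csub; ring.
- by rewrite /E00p; csub; ring.
- by rewrite /E01p; csub; ring.
- by rewrite /E10p; csub; ring.
Qed.

Lemma x1g0 : x1 \mPo g0 != 0.
Proof. by csub; exact: zz_neq0. Qed.

Lemma ev_nz u : u \mPo g0 != 0 -> ev u != 0.
Proof.
move=> h; apply/negP => /eqP hu.
by move: h; rewrite (curve_zero g0_G (@Qx1 k) x1g0 hu) eqxx.
Qed.

Lemma sT_G j : in_ideal G5 (G5 j \mPo sT).
Proof.
rewrite /G5; case: j => [[|[|[|[|[|j]]]]] hj] //=.
- have -> : DXp \mPo sT = 1 * DXp + 0 * DYp + 0 * E00p + 0 * E01p + 0 * E10p.
    by rewrite /DXp; csub; ring.
  exact: G_lin.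
- have -> : DYp \mPo sT = 0 * DXp + 1 * DYp + 0 * E00p + 0 * E01p + 0 * E10p.
    by rewrite /DYp; csub; ring.
  exact: G_lin.
- have -> : E00p \mPo sT = 0 * DXp + 0 * DYp + (-1) * E00p + 0 * E01p + 0 * E10p.
    by rewrite /E00p; csub; ring.
  exact: G_lin.
- have -> : E01p \mPo sT = 0 * DXp + 0 * DYp + 0 * E00p + 0 * E01p + (-1) * E10p.
    by rewrite /E01p /E10p; csub; ring.
  exact: G_lin.
- have -> : E10p \mPo sT = 0 * DXp + 0 * DYp + 0 * E00p + (-1) * E01p + 0 * E10p.
    by rewrite /E01p /E10p; csub; ring.
  exact: G_lin.
Qed.

Lemma sS_G j : in_ideal G5 (G5 j \mPo sS).
Proof.
rewrite /G5; case: j => [[|[|[|[|[|j]]]]] hj] //=.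
- have -> : DXp \mPo sS = (0) * DXp + (1) * DYp + (0) * E00p + (0) * E01p + (0) * E10p.
    by rewrite /DXp /DYp /E00p /E01p /E10p; csub; ring.
  exact: G_lin.
- have -> : DYp \mPo sS = (1) * DXp + (0) * DYp + (0) * E00p + (0) * E01p + (0) * E10p.
    by rewrite /DXp /DYp /E00p /E01p /E10p; csub; ring.
  exact: G_lin.
- have -> : E00p \mPo sS = (0) * DXp + (0) * DYp + (-1) * E00p + (0) * E01p + (0) * E10p.
    by rewrite /DXp /DYp /E00p /E01p /E10p; csub; ring.
  exact: G_lin.
- have -> : E01p \mPo sS = (0) * DXp + (0) * DYp + (0) * E00p + (-1) * E01p + (0) * E10p.
    by rewrite /DXp /DYp /E00p /E01p /E10p; csub; ring.
  exact: G_lin.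
- have -> : E10p \mPo sS = (0) * DXp + (0) * DYp + (0) * E00p + (0) * E01p + (-1) * E10p.
    by rewrite /DXp /DYp /E00p /E01p /E10p; csub; ring.
  exact: G_lin.
Qed.

Lemma sC_G j : in_ideal G5 (G5 j \mPo sC).
Proof.
rewrite /G5; case: j => [[|[|[|[|[|j]]]]] hj] //=.
- have -> : DXp \mPo sC = (1) * DXp + (0) * DYp + (0) * E00p + (0) * E01p + (0) * E10p.
    by rewrite /DXp /DYp /E00p /E01p /E10p; csub; ring.
  exact: G_lin.
- have -> : DYp \mPo sC = (0) * DXp + (1) * DYp + (0) * E00p + (0) * E01p + (0) * E10p.
    by rewrite /DXp /DYp /E00p /E01p /E10p; csub; ring.
  exact: G_lin.
- have -> : E00p \mPo sC = (0) * DXp + (0) * DYp + (1) * E00p + (0) * E01p + (1) * E10p.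
    by rewrite /DXp /DYp /E00p /E01p /E10p; csub; ring.
  exact: G_lin.
- have -> : E01p \mPo sC = (0) * DXp + (0) * DYp + (-2) * E00p + (1) * E01p + (-1) * E10p.
    by rewrite /DXp /DYp /E00p /E01p /E10p; csub; ring.
  exact: G_lin.
- have -> : E10p \mPo sC = (0) * DXp + (0) * DYp + (0) * E00p + (0) * E01p + (1) * E10p.
    by rewrite /DXp /DYp /E00p /E01p /E10p; csub; ring.
  exact: G_lin.
Qed.

Lemma sC'_G j : in_ideal G5 (G5 j \mPo sC').
Proof.
rewrite /G5; case: j => [[|[|[|[|[|j]]]]] hj] //=.
- have -> : DXp \mPo sC' = (1) * DXp + (0) * DYp + (0) * E00p + (0) * E01p + (0) * E10p.
    by rewrite /DXp /DYp /E00p /E01p /E10p; csub; ring.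
  exact: G_lin.
- have -> : DYp \mPo sC' = (0) * DXp + (1) * DYp + (0) * E00p + (0) * E01p + (0) * E10p.
    by rewrite /DXp /DYp /E00p /E01p /E10p; csub; ring.
  exact: G_lin.
- have -> : E00p \mPo sC' = (0) * DXp + (0) * DYp + (1) * E00p + (0) * E01p + (-1) * E10p.
    by rewrite /DXp /DYp /E00p /E01p /E10p; csub; ring.
  exact: G_lin.
- have -> : E01p \mPo sC' = (0) * DXp + (0) * DYp + (2) * E00p + (1) * E01p + (-1) * E10p.
    by rewrite /DXp /DYp /E00p /E01p /E10p; csub; ring.
  exact: G_lin.
- have -> : E10p \mPo sC' = (0) * DXp + (0) * DYp + (0) * E00p + (0) * E01p + (1) * E10p.
    by rewrite /DXp /DYp /E00p /E01p /E10p; csub; ring.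
  exact: G_lin.
Qed.

Lemma sT_inv (p : P8) : (p \mPo sT) \mPo sT = p.
Proof.
elim/mpoly_ind_ring: p.
- by move=> c; rewrite !comp_mpolyC.
- apply: (@var_case k 7 (fun p => (p \mPo sT) \mPo sT = p)) => j hj.
  by do 8?[case: j hj => [|j] hj]; try (by []); csub; csub; ring.
- by move=> p q e1 e2; rewrite !compD e1 e2.
- by move=> p q e1 e2; rewrite !compM e1 e2.
Qed.

Lemma sS_inv (p : P8) : (p \mPo sS) \mPo sS = p.
Proof.
elim/mpoly_ind_ring: p.
- by move=> c; rewrite !comp_mpolyC.
- apply: (@var_case k 7 (fun p => (p \mPo sS) \mPo sS = p)) => j hj.
  by do 8?[case: j hj => [|j] hj]; try (by []); csub; csub; ring.
- by move=> p q e1 e2; rewrite !compD e1 e2.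
- by move=> p q e1 e2; rewrite !compM e1 e2.
Qed.

Lemma sC_inv (p : P8) : (p \mPo sC) \mPo sC' = p.
Proof.
elim/mpoly_ind_ring: p.
- by move=> c; rewrite !comp_mpolyC.
- apply: (@var_case k 7 (fun p => (p \mPo sC) \mPo sC' = p)) => j hj.
  by do 8?[case: j hj => [|j] hj]; try (by []); csub; csub; ring.
- by move=> p q e1 e2; rewrite !compD e1 e2.
- by move=> p q e1 e2; rewrite !compM e1 e2.
Qed.


End Sym2.

Section Sym3.
Variable k : fieldType.
Local Notation P8 := {mpoly k[8]}.
Local Notation P5 := {mpoly k[5]}.
Local Notation P4 := {mpoly k[4]}.
Local Notation xv := (@xv k).
Local Notation x0 := (xv 0). Local Notation x1 := (xv 1).
Local Notation x2 := (xv 2). Local Notation x3 := (xv 3).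
Local Notation y0 := (xv 4). Local Notation y1 := (xv 5).
Local Notation y2 := (xv 6). Local Notation y3 := (xv 7).
Local Notation G5 := (@G5 k).
Local Notation DXp := (@DXp k). Local Notation DYp := (@DYp k).
Local Notation E00p := (@E00p k). Local Notation E01p := (@E01p k). Local Notation E10p := (@E10p k).
Local Notation ev := (ev_ratfun (@hh k)).

Local Notation Phi q := (q \mPo (@lPhi k)).
Local Notation Th r := (r \mPo (@lTh k)).
Local Notation tv := (@tv k).
Local Notation Tp := (@Tp k).
Local Notation Ft := (@Ft k).

Local Notation Q u := (forall p : P8, ev p = 0 -> exists N, in_ideal G5 (u ^+ N * p)).


Local Notation sT := (@sT k). Local Notation sS := (@sS k). Local Notation sC := (@sC k). Local Notation sC' := (@sC' k). Local Notation g0 := (@g0 k). Local Notation zz := (@zz k).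
Ltac csub := rewrite ?(compD, compB, compM, compN, compXn, comp1, comp_mpolyC) /xv;
  repeat (rewrite xsub //); rewrite /= ?/sT ?/sS ?/sC ?/sC' ?/g0 /= ?/xv.

Definition UU (j : nat) : P8 :=
  match j with
  | 0 => x1 | 1 => x2 | 2 => x1 \mPo sC' | 3 => x1 \mPo sS | 4 => x2 \mPo sS
  | _ => (x1 \mPo sC') \mPo sS end.

Lemma zz2_neq0 : zz ^+ 2 != 0.
Proof. by rewrite expf_neq0 // (@zz_neq0 k). Qed.

Lemma QU0 : Q x1. Proof. exact: (@Qx1 k). Qed.
Lemma QU1 : Q x2.
Proof.
have e : x1 \mPo sT = x2 by csub.
rewrite -e; apply: (transfer (@sT_G k) (@sT_G k) (@sT_inv k) _ QU0); apply: (@ev_nz k).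
by rewrite e; csub; exact: (@zz_neq0 k).
Qed.
Lemma QU2 : Q (x1 \mPo sC').
Proof.
apply: (transfer (@sC_G k) (@sC'_G k) (@sC_inv k) _ QU0); apply: (@ev_nz k).
have -> : (x1 \mPo sC) \mPo g0 = zz ^+ 2 by csub; csub; ring.
exact: zz2_neq0.
Qed.
Lemma QS u : Q u -> u \mPo sS \mPo g0 != 0 -> Q (u \mPo sS).
Proof. move=> hu hn; apply: (transfer (@sS_G k) (@sS_G k) (@sS_inv k) _ hu); exact: (@ev_nz k). Qed.
Lemma QU3 : Q (x1 \mPo sS).
Proof.
apply: (QS QU0); have -> : (x1 \mPo sS) \mPo g0 = zz by csub; csub.
exact: (@zz_neq0 k).
Qed.
Lemma QU4 : Q (x2 \mPo sS).
Proof.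
apply: (QS QU1); have -> : (x2 \mPo sS) \mPo g0 = zz by csub; csub.
exact: (@zz_neq0 k).
Qed.
Lemma QU5 : Q ((x1 \mPo sC') \mPo sS).
Proof.
apply: (QS QU2); have -> : ((x1 \mPo sC') \mPo sS) \mPo g0 = - zz ^+ 2 by csub; csub; csub; ring.
by rewrite oppr_eq0 zz2_neq0.
Qed.

Lemma QU j : (j < 6)%N -> Q (UU j).
Proof.
case: j => [|[|[|[|[|[|j]]]]]] hj; rewrite /UU.
- exact: QU0.
- exact: QU1.
- exact: QU2.
- exact: QU3.
- exact: QU4.
- exact: QU5.
- by move: hj; rewrite !ltnS ltn0.
Qed.

End Sym3.

Section Final.
Variable k : fieldType.
Local Notation P8 := {mpoly k[8]}.
Local Notation P5 := {mpoly k[5]}.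
Local Notation P4 := {mpoly k[4]}.
Local Notation xv := (@xv k).
Local Notation x0 := (xv 0). Local Notation x1 := (xv 1).
Local Notation x2 := (xv 2). Local Notation x3 := (xv 3).
Local Notation y0 := (xv 4). Local Notation y1 := (xv 5).
Local Notation y2 := (xv 6). Local Notation y3 := (xv 7).
Local Notation G5 := (@G5 k).
Local Notation DXp := (@DXp k). Local Notation DYp := (@DYp k).
Local Notation E00p := (@E00p k). Local Notation E01p := (@E01p k). Local Notation E10p := (@E10p k).
Local Notation ev := (ev_ratfun (@hh k)).

Local Notation Phi q := (q \mPo (@lPhi k)).
Local Notation Th r := (r \mPo (@lTh k)).
Local Notation tv := (@tv k).
Local Notation Tp := (@Tp k).
Local Notation Ft := (@Ft k).

Local Notation Q u := (forall p : P8, ev p = 0 -> exists N, in_ideal G5 (u ^+ N * p)).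


Local Notation sT := (@sT k). Local Notation sS := (@sS k). Local Notation sC := (@sC k). Local Notation sC' := (@sC' k). Local Notation g0 := (@g0 k). Local Notation zz := (@zz k).
Ltac csub := rewrite ?(compD, compB, compM, compN, compXn, comp1, comp_mpolyC) /xv;
  repeat (rewrite xsub //); rewrite /= ?/sT ?/sS ?/sC ?/sC' ?/g0 /= ?/xv.

Local Notation UU := (@UU k).

Definition gpt (e d : k) : 8.-tuple {mpoly k[1]} :=
  [tuple e%:MP; e%:MP * zz; 0; e%:MP; d%:MP; 0; 0; d%:MP].
Definition pt (e d : k) : 'I_8 -> k := fun i => nth 0 [:: e; 0; 0; e; d; 0; 0; d] i.

Lemma gpt_G e d : e * e = 1 -> d * d = 1 -> forall j, G5 j \mPo gpt e d = 0.
Proof.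
move=> he hd j; rewrite /G5; case: j => [[|[|[|[|[|j]]]]] hj] //=.
- have -> : DXp \mPo gpt e d = (e * e)%:MP - 1.
    by rewrite /DXp /gpt; csub; rewrite mpolyCM; ring.
  by rewrite he mpolyC1 subrr.
- have -> : DYp \mPo gpt e d = (d * d)%:MP - 1.
    by rewrite /DYp /gpt; csub; rewrite mpolyCM; ring.
  by rewrite hd mpolyC1 subrr.
- by rewrite /E00p /gpt; csub; ring.
- by rewrite /E01p /gpt; csub; ring.
- by rewrite /E10p /gpt; csub; ring.
Qed.

Lemma val_pt e d p : e * e = 1 -> d * d = 1 -> ev p = 0 -> meval (pt e d) p = 0.
Proof.
move=> he hd hp.
have ne : e != 0 by apply/eqP => e0; move: he; rewrite e0 mul0r => /eqP; rewrite eq_sym oner_eq0.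
have nz : x1 \mPo gpt e d != 0.
  rewrite /gpt; csub; rewrite mulf_neq0 // ?mpolyC_eq0 //; exact: (@zz_neq0 k).
have hz := curve_zero (gpt_G he hd) (@QU0 k) nz hp.
have := comp_mpoly_meval (fun=> 0) p (gpt e d); rewrite hz meval0 => ->.
apply: meval_eq => i; case: i => [[|[|[|[|[|[|[|[|i]]]]]]]] hi] //=;
  rewrite /pt /= ?(mevalM, mevalC, mevalXU, meval0) ?mulr0 //.
Qed.

Definition Km m (p : P8) := exists a : nat -> P8, in_ideal G5 (p - \sum_(j < m) a j * UU j).

Lemma Km_G m p : in_ideal G5 p -> Km m p.
Proof.
by move=> h; exists (fun=> 0); rewrite big1 ?subr0 // => j _; rewrite mul0r.
Qed.
Lemma Km_D m p q : Km m p -> Km m q -> Km m (p + q).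
Proof.
move=> [a ha] [b hb]; exists (fun j => a j + b j).
have -> : p + q - \sum_(j < m) (a j + b j) * UU j = (p - \sum_(j < m) a j * UU j) + (q - \sum_(j < m) b j * UU j).
  by rewrite (eq_bigr (fun j : 'I_m => a j * UU j + b j * UU j)) ?big_split /=; [ring | move=> j _; rewrite mulrDl].
exact: in_idealD.
Qed.
Lemma Km_Ml m c p : Km m p -> Km m (c * p).
Proof.
move=> [a ha]; exists (fun j => c * a j).
have -> : c * p - \sum_(j < m) (c * a j) * UU j = c * (p - \sum_(j < m) a j * UU j).
  by rewrite mulrBr mulr_sumr; congr (_ - _); apply: eq_bigr => j _; rewrite mulrA.
exact: in_idealMl.
Qed.
Lemma Km_N m p : Km m p -> Km m (- p).
Proof. by move=> h; rewrite -mulN1r; apply: Km_Ml. Qed.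
Lemma Km_B m p q : Km m p -> Km m q -> Km m (p - q).
Proof. by move=> hp hq; apply: Km_D => //; apply: Km_N. Qed.
Lemma Km_U m j : (j < m)%N -> Km m (UU j).
Proof.
move=> hj; exists (fun i => (i == j)%:R).
rewrite (bigD1 (Ordinal hj)) //= eqxx mul1r big1 ?addr0 ?subrr; first exact: in_ideal0.
by move=> i /negbTE hi; rewrite (_ : (nat_of_ord i == j) = false) ?mul0r //; apply/negbTE; apply: contraFneq hi => e; apply/eqP/val_inj.
Qed.

End Final.

Section Final2.
Variable k : fieldType.
Local Notation P8 := {mpoly k[8]}.
Local Notation P5 := {mpoly k[5]}.
Local Notation P4 := {mpoly k[4]}.
Local Notation xv := (@xv k).
Local Notation x0 := (xv 0). Local Notation x1 := (xv 1).
Local Notation x2 := (xv 2). Local Notation x3 := (xv 3).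
Local Notation y0 := (xv 4). Local Notation y1 := (xv 5).
Local Notation y2 := (xv 6). Local Notation y3 := (xv 7).
Local Notation G5 := (@G5 k).
Local Notation DXp := (@DXp k). Local Notation DYp := (@DYp k).
Local Notation E00p := (@E00p k). Local Notation E01p := (@E01p k). Local Notation E10p := (@E10p k).
Local Notation ev := (ev_ratfun (@hh k)).

Local Notation Phi q := (q \mPo (@lPhi k)).
Local Notation Th r := (r \mPo (@lTh k)).
Local Notation tv := (@tv k).
Local Notation Tp := (@Tp k).
Local Notation Ft := (@Ft k).

Local Notation Q u := (forall p : P8, ev p = 0 -> exists N, in_ideal G5 (u ^+ N * p)).


Local Notation sT := (@sT k). Local Notation sS := (@sS k). Local Notation sC := (@sC k). Local Notation sC' := (@sC' k). Local Notation g0 := (@g0 k). Local Notation zz := (@zz k).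
Ltac csub := rewrite ?(compD, compB, compM, compN, compXn, comp1, comp_mpolyC) /xv;
  repeat (rewrite xsub //); rewrite /= ?/sT ?/sS ?/sC ?/sC' ?/g0 /= ?/xv.

Local Notation UU := (@UU k).

Local Notation K := (@Km k 6).
Local Notation pt := (@pt k).

Lemma UU2e : UU 2 = x1 + x0 - x2 - x3. Proof. by rewrite /UU; csub. Qed.
Lemma UU3e : UU 3 = y1. Proof. by rewrite /UU; csub. Qed.
Lemma UU4e : UU 4 = y2. Proof. by rewrite /UU; csub. Qed.
Lemma UU5e : UU 5 = y1 + y0 - y2 - y3. Proof. by rewrite /UU; csub; csub. Qed.

Lemma K_x1 : K x1. Proof. exact: (@Km_U k 6 0). Qed.
Lemma K_x2 : K x2. Proof. exact: (@Km_U k 6 1). Qed.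
Lemma K_y1 : K y1. Proof. rewrite -UU3e; exact: (@Km_U k 6 3). Qed.
Lemma K_y2 : K y2. Proof. rewrite -UU4e; exact: (@Km_U k 6 4). Qed.
Lemma K_x3 : K (x3 - x0).
Proof.
have -> : x3 - x0 = x1 - x2 - (x1 + x0 - x2 - x3) by ring.
rewrite -UU2e; apply: Km_B; [apply: Km_B; [exact: K_x1 | exact: K_x2] | exact: (@Km_U k 6 2)].
Qed.
Lemma K_y3 : K (y3 - y0).
Proof.
have -> : y3 - y0 = y1 - y2 - (y1 + y0 - y2 - y3) by ring.
rewrite -UU5e; apply: Km_B; [apply: Km_B; [exact: K_y1 | exact: K_y2] | exact: (@Km_U k 6 5)].
Qed.
Lemma K_x0sq : K (x0 * x0 - 1).
Proof.
have -> : x0 * x0 - 1 = DXp - x0 * (x3 - x0) + x1 * x2 by rewrite /DXp; ring.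
apply: Km_D; first apply: Km_B.
- apply: Km_G; have -> : DXp = 1 * DXp + 0 * DYp + 0 * E00p + 0 * E01p + 0 * E10p by ring.
  exact: G_lin.
- exact: Km_Ml K_x3.
- exact: Km_Ml K_x2.
Qed.
Lemma K_y0sq : K (y0 * y0 - 1).
Proof.
have -> : y0 * y0 - 1 = DYp - y0 * (y3 - y0) + y1 * y2 by rewrite /DYp; ring.
apply: Km_D; first apply: Km_B.
- apply: Km_G; have -> : DYp = 0 * DXp + 1 * DYp + 0 * E00p + 0 * E01p + 0 * E10p by ring.
  exact: G_lin.
- exact: Km_Ml K_y3.
- exact: Km_Ml K_y2.
Qed.

Definition L4 (A B C D : k) : P8 := A%:MP + B%:MP * x0 + C%:MP * y0 + D%:MP * (x0 * y0).

Lemma decomp4 p : exists A B C D : k, K (p - L4 A B C D).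
Proof.
elim/mpoly_ind_ring: p.
- move=> c; exists c, 0, 0, 0; rewrite /L4 !mpolyC0 !mul0r !addr0 subrr.
  exact/Km_G/in_ideal0.
- apply: (@var_case k 7 (fun p => exists A B C D : k, K (p - L4 A B C D))) => j hj.
  do 8?[case: j hj => [|j] hj]; last by move: hj; rewrite !ltnS ltn0.
  + exists 0, 1, 0, 0; rewrite /L4 !mpolyC0 mpolyC1 !mul0r !addr0 add0r mul1r subrr.
    exact/Km_G/in_ideal0.
  + exists 0, 0, 0, 0; rewrite /L4 !mpolyC0 !mul0r !addr0 subr0; exact: K_x1.
  + exists 0, 0, 0, 0; rewrite /L4 !mpolyC0 !mul0r !addr0 subr0; exact: K_x2.
  + exists 0, 1, 0, 0; rewrite /L4 !mpolyC0 mpolyC1 !mul0r !addr0 add0r mul1r; exact: K_x3.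
  + exists 0, 0, 1, 0; rewrite /L4 !mpolyC0 mpolyC1 !mul0r !addr0 !add0r mul1r subrr.
    exact/Km_G/in_ideal0.
  + exists 0, 0, 0, 0; rewrite /L4 !mpolyC0 !mul0r !addr0 subr0; exact: K_y1.
  + exists 0, 0, 0, 0; rewrite /L4 !mpolyC0 !mul0r !addr0 subr0; exact: K_y2.
  + exists 0, 0, 1, 0; rewrite /L4 !mpolyC0 mpolyC1 !mul0r !addr0 !add0r mul1r; exact: K_y3.
- move=> p q [A [B [C [D h1]]]] [A' [B' [C' [D' h2]]]].
  exists (A + A'), (B + B'), (C + C'), (D + D').
  have -> : p + q - L4 (A + A') (B + B') (C + C') (D + D') = (p - L4 A B C D) + (q - L4 A' B' C' D').
    by rewrite /L4 !mpolyCD; ring.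
  exact: Km_D.
- move=> p q [A [B [C [D h1]]]] [A' [B' [C' [D' h2]]]].
  exists (A * A' + B * B' + C * C' + D * D'), (A * B' + B * A' + C * D' + D * C'),
    (A * C' + C * A' + B * D' + D * B'), (A * D' + D * A' + B * C' + C * B').
  have -> : p * q - L4 (A * A' + B * B' + C * C' + D * D') (A * B' + B * A' + C * D' + D * C')
    (A * C' + C * A' + B * D' + D * B') (A * D' + D * A' + B * C' + C * B') =
    q * (p - L4 A B C D) + L4 A B C D * (q - L4 A' B' C' D')
    + ((B%:MP + D%:MP * y0) * (B'%:MP + D'%:MP * y0)) * (x0 * x0 - 1)
    + ((C * C' + D * D')%:MP + x0 * (C * D' + D * C')%:MP) * (y0 * y0 - 1).
    by rewrite /L4 !mpolyCD !mpolyCM; ring.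
  apply: Km_D; last exact: Km_Ml K_y0sq.
  apply: Km_D; last exact: Km_Ml K_x0sq.
  by apply: Km_D; apply: Km_Ml.
Qed.

End Final2.

Section Final3.
Variable k : fieldType.
Local Notation P8 := {mpoly k[8]}.
Local Notation P5 := {mpoly k[5]}.
Local Notation P4 := {mpoly k[4]}.
Local Notation xv := (@xv k).
Local Notation x0 := (xv 0). Local Notation x1 := (xv 1).
Local Notation x2 := (xv 2). Local Notation x3 := (xv 3).
Local Notation y0 := (xv 4). Local Notation y1 := (xv 5).
Local Notation y2 := (xv 6). Local Notation y3 := (xv 7).
Local Notation G5 := (@G5 k).
Local Notation DXp := (@DXp k). Local Notation DYp := (@DYp k).
Local Notation E00p := (@E00p k). Local Notation E01p := (@E01p k). Local Notation E10p := (@E10p k).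
Local Notation ev := (ev_ratfun (@hh k)).

Local Notation Phi q := (q \mPo (@lPhi k)).
Local Notation Th r := (r \mPo (@lTh k)).
Local Notation tv := (@tv k).
Local Notation Tp := (@Tp k).
Local Notation Ft := (@Ft k).

Local Notation Q u := (forall p : P8, ev p = 0 -> exists N, in_ideal G5 (u ^+ N * p)).


Local Notation sT := (@sT k). Local Notation sS := (@sS k). Local Notation sC := (@sC k). Local Notation sC' := (@sC' k). Local Notation g0 := (@g0 k). Local Notation zz := (@zz k).
Ltac csub := rewrite ?(compD, compB, compM, compN, compXn, comp1, comp_mpolyC) /xv;
  repeat (rewrite xsub //); rewrite /= ?/sT ?/sS ?/sC ?/sC' ?/g0 /= ?/xv.

Local Notation UU := (@UU k).

Local Notation K := (@Km k 6).
Local Notation pt := (@pt k).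

Local Notation L4 := (@L4 k).

Lemma mevx e d j : (j < 8)%N -> meval (pt e d) (xv j) = nth 0 [:: e; 0; 0; e; d; 0; 0; d] j.
Proof. by move=> hj; rewrite /xv mevalXU /pt inordK. Qed.

Lemma meval_G e d : e * e = 1 -> d * d = 1 -> forall q, in_ideal G5 q -> meval (pt e d) q = 0.
Proof.
move=> he hd q [c ->]; rewrite (big_morph (meval (pt e d)) (@mevalD _ _ _) (@meval0 _ _ _)).
rewrite big1 // => j _; rewrite mevalM; apply/eqP; rewrite mulf_eq0; apply/orP; right; apply/eqP.
rewrite /G5; case: j => [[|[|[|[|[|j]]]]] hj] //=.
- by rewrite /DXp !(mevalB, mevalM, meval1) !mevx //= he; ring.
- by rewrite /DYp !(mevalB, mevalM, meval1) !mevx //= hd; ring.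
- by rewrite /E00p !(mevalB, mevalM) !mevx //=; ring.
- by rewrite /E01p !(mevalB, mevalM) !mevx //=; ring.
- by rewrite /E10p !(mevalB, mevalM) !mevx //=; ring.
Qed.

Lemma K_pt e d p : e * e = 1 -> d * d = 1 -> K p -> meval (pt e d) p = 0.
Proof.
move=> he hd [a ha]; have := meval_G he hd ha; rewrite mevalB => /eqP; rewrite subr_eq0 => /eqP ->.
rewrite (big_morph (meval (pt e d)) (@mevalD _ _ _) (@meval0 _ _ _)) big1 // => j _.
rewrite mevalM; apply/eqP; rewrite mulf_eq0; apply/orP; right; apply/eqP.
case: j => [[|[|[|[|[|[|j]]]]]] hj]; rewrite /nat_of_ord.
- by rewrite /UU mevx.
- by rewrite /UU mevx.
- by rewrite UU2e !(mevalB, mevalD) !mevx //=; ring.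
- by rewrite UU3e mevx.
- by rewrite UU4e mevx.
- by rewrite UU5e !(mevalB, mevalD) !mevx //=; ring.
- by move: hj; rewrite !ltnS ltn0.
Qed.

Lemma binom (A B : P8) N : exists w, (A + B) ^+ N = A ^+ N + B * w.
Proof.
elim: N => [|N [w hw]]; first by exists 0; rewrite !expr0 mulr0 addr0.
exists (A ^+ N + (A + B) * w); rewrite !exprS hw; ring.
Qed.

Lemma iterK m : (m <= 6)%N -> forall p, ev p = 0 -> Km m p -> exists e, in_ideal G5 (p ^+ e).
Proof.
elim: m => [|m IH] hm p hp [a ha].
  by exists 1%N; move: ha; rewrite big_ord0 subr0 expr1.
have [N hN] := QU hm hp.
pose A : P8 := a m * UU m; pose B : P8 := p - A.
have KB : Km m B.
  exists a; move: ha; rewrite big_ord_recr /=.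
  have -> : B - \sum_(i < m) a i * UU i = p - (\sum_(i < m) a i * UU i + a m * UU m :> P8).
    by rewrite /B /A opprD addrA addrAC.
  done.
have [w hw] := binom A B N.
have e1 : p ^+ N.+1 = a m ^+ N * (UU m ^+ N * p) + B * (p * w).
  have -> : p ^+ N.+1 = p * (A + B) ^+ N by rewrite /B addrC subrK exprS.
  by rewrite hw /A /B exprMn; ring.
have hpN : ev (p ^+ N.+1) = 0 by rewrite evXn hp expr0n.
have K1 : Km m (p ^+ N.+1).
  rewrite e1; apply: Km_D; first exact/Km_G/in_idealMl.
  rewrite mulrC; exact: Km_Ml KB.
have [e he] := IH (ltnW hm) _ hpN K1.
by exists (N.+1 * e)%N; rewrite exprM.
Qed.

End Final3.

Section Final4.
Variable k : fieldType.
Local Notation P8 := {mpoly k[8]}.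
Local Notation P5 := {mpoly k[5]}.
Local Notation P4 := {mpoly k[4]}.
Local Notation xv := (@xv k).
Local Notation x0 := (xv 0). Local Notation x1 := (xv 1).
Local Notation x2 := (xv 2). Local Notation x3 := (xv 3).
Local Notation y0 := (xv 4). Local Notation y1 := (xv 5).
Local Notation y2 := (xv 6). Local Notation y3 := (xv 7).
Local Notation G5 := (@G5 k).
Local Notation DXp := (@DXp k). Local Notation DYp := (@DYp k).
Local Notation E00p := (@E00p k). Local Notation E01p := (@E01p k). Local Notation E10p := (@E10p k).
Local Notation ev := (ev_ratfun (@hh k)).

Local Notation Phi q := (q \mPo (@lPhi k)).
Local Notation Th r := (r \mPo (@lTh k)).
Local Notation tv := (@tv k).
Local Notation Tp := (@Tp k).
Local Notation Ft := (@Ft k).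

Local Notation Q u := (forall p : P8, ev p = 0 -> exists N, in_ideal G5 (u ^+ N * p)).


Local Notation sT := (@sT k). Local Notation sS := (@sS k). Local Notation sC := (@sC k). Local Notation sC' := (@sC' k). Local Notation g0 := (@g0 k). Local Notation zz := (@zz k).
Ltac csub := rewrite ?(compD, compB, compM, compN, compXn, comp1, comp_mpolyC) /xv;
  repeat (rewrite xsub //); rewrite /= ?/sT ?/sS ?/sC ?/sC' ?/g0 /= ?/xv.

Local Notation UU := (@UU k).

Local Notation K := (@Km k 6).
Local Notation pt := (@pt k).

Local Notation L4 := (@L4 k).

Hypothesis hk : [pchar k]%R =i pred0.

Lemma main_ker p : ev p = 0 -> in_radical (SI_eqs k) p.
Proof.
move=> hp; have [A [B [C [D hK]]]] := decomp4 p.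
have vals e d : e * e = 1 -> d * d = 1 -> A + B * e + C * d + D * (e * d) = 0.
  move=> he hd; have h1 := K_pt he hd hK.
  rewrite mevalB (val_pt he hd hp) sub0r in h1.
  move/eqP: h1; rewrite oppr_eq0 /L4 !(mevalD, mevalM, mevalC) !mevx //= => /eqP //.
have o1 : (1 : k) * 1 = 1 by rewrite mulr1.
have m1 : (-1 : k) * (-1) = 1 by rewrite mulrNN mulr1.
have v11 := vals _ _ o1 o1; have v1m := vals _ _ o1 m1.
have vm1 := vals _ _ m1 o1; have vmm := vals _ _ m1 m1.
have four : (4%:R : k) != 0 by rewrite (pcharf0P _).1.
have z (x : k) : (4%:R : k) * x = 0 -> x = 0 by move/eqP; rewrite mulf_eq0 (negbTE four) /= => /eqP.
have hA : A = 0.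
  apply: z; have e : (4%:R : k) * A = (A + B * 1 + C * 1 + D * (1 * 1)) + (A + B * 1 + C * -1 + D * (1 * -1)) + (A + B * -1 + C * 1 + D * (-1 * 1)) + (A + B * -1 + C * -1 + D * (-1 * -1)) by ring.
  by rewrite e v11 v1m vm1 vmm; ring.
have hB : B = 0.
  apply: z; have e : (4%:R : k) * B = (A + B * 1 + C * 1 + D * (1 * 1)) + (A + B * 1 + C * -1 + D * (1 * -1)) - (A + B * -1 + C * 1 + D * (-1 * 1)) - (A + B * -1 + C * -1 + D * (-1 * -1)) by ring.
  by rewrite e v11 v1m vm1 vmm; ring.
have hC : C = 0.
  apply: z; have e : (4%:R : k) * C = (A + B * 1 + C * 1 + D * (1 * 1)) - (A + B * 1 + C * -1 + D * (1 * -1)) + (A + B * -1 + C * 1 + D * (-1 * 1)) - (A + B * -1 + C * -1 + D * (-1 * -1)) by ring.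
  by rewrite e v11 v1m vm1 vmm; ring.
have hD : D = 0.
  apply: z; have e : (4%:R : k) * D = (A + B * 1 + C * 1 + D * (1 * 1)) - (A + B * 1 + C * -1 + D * (1 * -1)) - (A + B * -1 + C * 1 + D * (-1 * 1)) + (A + B * -1 + C * -1 + D * (-1 * -1)) by ring.
  by rewrite e v11 v1m vm1 vmm; ring.
move: hK; rewrite hA hB hC hD /L4 !mpolyC0 !mul0r !addr0 subr0 => hK.
have [e he] := @iterK k 6 (leqnn 6) p hp hK.
by exists e; apply/IG.
Qed.

End Final4.

Theorem proposition3p8 (k : fieldType) (hk : [pchar k]%R =i pred0) :
  k_rational_of_dim (SI_eqs k) 4.
Proof.
exists (hh k); split.
- move=> p; split; [exact: main_ker | exact: rad_ev].
- move=> j; case: j => [[|[|[|[|j]]]] hj].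
  + exists (xv k 0), 1; split; first by rewrite ev1 oner_neq0.
    rewrite ev1 divr1 evx //= /Tv; congr (FracField.tofrac 'X__); apply/val_inj; by rewrite /= inordK.
  + exists (xv k 1), 1; split; first by rewrite ev1 oner_neq0.
    rewrite ev1 divr1 evx //= /Tv; congr (FracField.tofrac 'X__); apply/val_inj; by rewrite /= inordK.
  + exists (xv k 1 * xv k 4 - xv k 5 * xv k 0), 1; split; first by rewrite ev1 oner_neq0.
    rewrite ev1 divr1 ev_c /Tv; congr (FracField.tofrac 'X__); apply/val_inj; by rewrite /= inordK.
  + exists (xv k 5), 1; split; first by rewrite ev1 oner_neq0.
    rewrite ev1 divr1 evx //= /Tv; congr (FracField.tofrac 'X__); apply/val_inj; by rewrite /= inordK.
  + exfalso; move: hj; by rewrite !ltnS ltn0.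
Qed.
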